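(* Let $P_1$ be the uniform distribution on $[0,\frac12]$, let $P_2$ be the uniform distribution on $[\frac12,1]$, and let $P=\frac34P_1+\frac14P_2$. Then the set $$\Big\{\tfrac13\big(\tfrac18(21-\sqrt3)-2\big),\ \tfrac18(21-\sqrt3)-2,\ \tfrac1{24}(21-\sqrt3)\Big\}$$ forms an optimal set of three-means for $P$, with quantization error $V_3=0.00787482$.
   Context: For a finite set $\alpha\subset\mathbb R$, $V(P;\alpha)=\int\min_{a\in\alpha}(x-a)^2\,dP(x)$; $V_n=\inf\{V(P;\alpha):\mathrm{card}(\alpha)\le n\}$; an optimal set of $n$-means is a set $\alpha$ with $\mathrm{card}(\alpha)\le n$ and $V(P;\alpha)=V_n$. The numerical value of $V_3$ is a decimal approximation as given in the source. *)

(* Defs.v *)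
From Stdlib Require Import Reals List.
From Coquelicot Require Import Coquelicot.
Open Scope R_scope.

Definition mindist (alpha : list R) (x : R) : R :=
  match alpha with
  | nil => 0
  | a :: t => fold_right (fun b m => Rmin ((x - b) ^ 2) m) ((x - a) ^ 2) t
  end.

Definition unif_exp (a b : R) (g : R -> R) : R := RInt g a b / (b - a).

Definition EP (g : R -> R) : R :=
  3/4 * unif_exp 0 (1/2) g + 1/4 * unif_exp (1/2) 1 g.

Definition Verr (alpha : list R) : R := EP (mindist alpha).

(* admissible sets for n-means: nonempty, card <= n
   (empty set has infinite distortion, so it never competes) *)
Definition admissible (n : nat) (alpha : list R) : Prop :=
  alpha <> nil /\ (length alpha <= n)%nat.

Definition optimal_set (n : nat) (alpha : list R) : Prop :=
  admissible n alpha /\ forall beta, admissible n beta -> Verr alpha <= Verr beta.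

(* Main.v *)
Require Import Defs.
From Stdlib Require Import Reals List Lra Psatz.
From Coquelicot Require Import Coquelicot.
Open Scope R_scope.


Definition K (c a b : R) : R := ((b - c)^3 - (a - c)^3) / 3.

Lemma is_RInt_sq c a b : is_RInt (fun x => (x - c)^2) a b (K c a b).
Proof.
  replace (K c a b) with (minus ((fun x => (x - c)^3/3) b) ((fun x => (x - c)^3/3) a)).
  2:{ unfold minus, plus, opp; simpl. unfold K. field. }
  apply (is_RInt_derive (fun x => (x - c)^3/3) (fun x => (x - c)^2)).
  - intros x _. auto_derive; [exact I| simpl; field].
  - intros x _. apply (ex_derive_continuous (K:=R_AbsRing) (V:=R_NormedModule) (fun x => (x - c)^2)). auto_derive. exact I.
Qed.

Lemma piece (g : R -> R) c a b : a <= b ->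
  (forall x, a < x < b -> g x = (x - c)^2) -> is_RInt g a b (K c a b).
Proof.
  intros Hab H. apply is_RInt_ext with (f := fun x => (x - c)^2).
  - intros x Hx. rewrite Rmin_left in Hx by lra. rewrite Rmax_right in Hx by lra.
    symmetry; apply H; lra.
  - apply is_RInt_sq.
Qed.

Lemma three (g : R -> R) p q r a u1 u2 b : a <= u1 -> u1 <= u2 -> u2 <= b ->
  (forall x, a < x < u1 -> g x = (x - p)^2) ->
  (forall x, u1 < x < u2 -> g x = (x - q)^2) ->
  (forall x, u2 < x < b -> g x = (x - r)^2) ->
  RInt g a b = K p a u1 + K q u1 u2 + K r u2 b.
Proof.
  intros h1 h2 h3 H1 H2 H3. apply is_RInt_unique.
  apply (is_RInt_Chasles g a u2 b).
  - apply (is_RInt_Chasles g a u1 u2); apply piece; auto.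
  - apply piece; auto.
Qed.

Definition m3 p q r x := Rmin ((x-p)^2) (Rmin ((x-q)^2) ((x-r)^2)).

Lemma m3_left p q r x : p <= q <= r -> x < (p+q)/2 -> m3 p q r x = (x-p)^2.
Proof.
  intros H Hx. assert ((x-p)^2 <= (x-q)^2) by nra. assert ((x-p)^2 <= (x-r)^2) by nra.
  unfold m3, Rmin. repeat destruct Rle_dec; lra.
Qed.
Lemma m3_mid p q r x : p <= q <= r -> (p+q)/2 < x < (q+r)/2 -> m3 p q r x = (x-q)^2.
Proof.
  intros H Hx. assert ((x-q)^2 <= (x-p)^2) by nra. assert ((x-q)^2 <= (x-r)^2) by nra.
  unfold m3, Rmin. repeat destruct Rle_dec; lra.
Qed.
Lemma m3_right p q r x : p <= q <= r -> (q+r)/2 < x -> m3 p q r x = (x-r)^2.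
Proof.
  intros H Hx. assert ((x-r)^2 <= (x-p)^2) by nra. assert ((x-r)^2 <= (x-q)^2) by nra.
  unfold m3, Rmin. repeat destruct Rle_dec; lra.
Qed.

Definition clamp t := Rmax 0 (Rmin t 1).

Definition Eb s1 s2 p q r :=
  3/2*(K p 0 (Rmin s1 (1/2)) + K q (Rmin s1 (1/2)) (Rmin s2 (1/2)) + K r (Rmin s2 (1/2)) (1/2))
  + 1/2*(K p (1/2) (Rmax s1 (1/2)) + K q (Rmax s1 (1/2)) (Rmax s2 (1/2)) + K r (Rmax s2 (1/2)) 1).

Lemma EP_m3 (g : R -> R) p q r : p <= q <= r -> (forall x, g x = m3 p q r x) ->
  EP g = Eb (clamp ((p+q)/2)) (clamp ((q+r)/2)) p q r.
Proof.
  intros H Hg. unfold EP, unif_exp, Eb, clamp.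
  set (t1 := (p+q)/2). set (t2 := (q+r)/2).
  assert (t1 <= t2) by (unfold t1, t2; lra).
  rewrite (three g p q r 0 (Rmin (Rmax 0 (Rmin t1 1)) (1/2)) (Rmin (Rmax 0 (Rmin t2 1)) (1/2)) (1/2)).
  rewrite (three g p q r (1/2) (Rmax (Rmax 0 (Rmin t1 1)) (1/2)) (Rmax (Rmax 0 (Rmin t2 1)) (1/2)) 1).
  - field.
  all: try (unfold Rmin, Rmax; repeat destruct Rle_dec; lra).
  all: intros x Hx; rewrite Hg.
  all: first [apply m3_left | apply m3_mid | apply m3_right]; auto;
       fold t1 t2; revert Hx; unfold Rmin, Rmax; repeat destruct Rle_dec; lra.
Qed.

Lemma K_nonneg c a b : a <= b -> 0 <= K c a b.
Proof. intros H. unfold K. assert (0 <= (b-a)*((b-c)^2+(b-c)*(a-c)+(a-c)^2)).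
  { apply Rmult_le_pos. lra. assert (0 <= ((b-c)+(a-c)/2)^2) by apply pow2_ge_0. assert (0 <= (a-c)^2) by apply pow2_ge_0. nra. } lra. Qed.

Lemma K_W c a b : a <= b -> (b-a)^3/12 <= K c a b.
Proof. intros H. unfold K. assert (0 <= (b-a)*(c-(a+b)/2)^2) by (apply Rmult_le_pos; [lra|apply pow2_ge_0]). lra. Qed.

Lemma K0 c a : K c a a = 0.
Proof. unfold K. field. Qed.

Definition G q := 1/3*(1/2-q)^3 + q^3/18 + (1-q)^3/54.

Lemma G_id k q : k*k = 3 -> G q - (4-k)/288 = -8/27 * (q - (5-k)/8)^2 * (q - (5+2*k)/8).
Proof. intros H.
  assert (E : G q - (4-k)/288 - (-8/27 * (q - (5-k)/8)^2 * (q - (5+2*k)/8)) = (k*k-3)*(5/576 - q/72 - k/864)) by (unfold G; field).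
  rewrite H in E. lra. Qed.

Lemma hA s1 q : 0 <= s1 <= 1/2 -> 3/16 <= q -> s1^3/8 - (s1-q)^3/2 >= q^3/18.
Proof. intros H1 H2. assert (0 <= (s1-2*q/3)^2*(q-3*s1/8)) by (apply Rmult_le_pos; [apply pow2_ge_0|lra]). lra. Qed.

Lemma hB s2 q : 1/2 <= s2 <= 1 -> q <= 13/16 -> (1-s2)^3/24 + (s2-q)^3/6 >= (1-q)^3/54.
Proof. intros H1 H2. assert (0 <= (s2-(1+2*q)/3)^2*(s2/8+(1-q)/3-1/8)) by (apply Rmult_le_pos; [apply pow2_ge_0|lra]). lra. Qed.

Lemma K_mono q q' a b : a <= b -> ((q <= q' <= a) \/ (b <= q' <= q)) -> K q' a b <= K q a b.
Proof. intros H1 H2.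
  assert (0 <= (q'-q)*(b-a)*(a+b-q-q')).
  { destruct H2. - apply Rmult_le_pos. apply Rmult_le_pos; lra. lra.
    - replace ((q'-q)*(b-a)*(a+b-q-q')) with ((q-q')*(b-a)*(q+q'-a-b)) by ring.
      apply Rmult_le_pos. apply Rmult_le_pos; lra. lra. }
  unfold K. lra. Qed.

Lemma cube_split a b : 0 <= a -> 0 <= b -> (a+b)^3/4 <= a^3 + b^3.
Proof. intros. assert (0 <= (a+b)*(a-b)^2) by (apply Rmult_le_pos; [lra|apply pow2_ge_0]). lra. Qed.

Lemma kbounds k : k*k = 3 -> 0 <= k -> 1732050/1000000 <= k <= 1732051/1000000.
Proof. intros. split; nra. Qed.

Lemma cube_mono a x : a <= x -> a^3 <= x^3.
Proof. intros H. assert (0 <= (x-a)*((x+a/2)^2 + 3*a^2/4)).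
  { apply Rmult_le_pos. lra. assert (0 <= (x+a/2)^2) by apply pow2_ge_0. assert (0 <= a^2) by apply pow2_ge_0. lra. }
  lra. Qed.

Lemma caseb_win s1 s2 p q r k : k*k = 3 -> 0 <= k -> 0 <= s1 <= 1/2 -> 1/2 <= s2 <= 1 ->
  3/16 <= q <= 13/16 ->
  (4-k)/288 <= 3/2*(K p 0 s1 + K q s1 (1/2)) + 1/2*(K q (1/2) s2 + K r s2 1).
Proof.
  intros Hk Hk0 H1 H2 Hq.
  pose proof (K_W p 0 s1 ltac:(lra)). pose proof (K_W r s2 1 ltac:(lra)).
  pose proof (hA s1 q H1 ltac:(lra)). pose proof (hB s2 q H2 ltac:(lra)).
  pose proof (G_id k q Hk). pose proof (kbounds k Hk Hk0).
  assert (0 <= (q - (5-k)/8)^2 * ((5+2*k)/8 - q)) by (apply Rmult_le_pos; [apply pow2_ge_0|lra]).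
  assert (G q >= (4-k)/288) by lra.
  assert (3/2*(K p 0 s1 + K q s1 (1/2)) + 1/2*(K q (1/2) s2 + K r s2 1) >= G q).
  { unfold G, K in *. lra. }
  lra.
Qed.

Lemma caseb_lo s1 s2 p q r : 0 <= s1 <= 1/2 -> 1/2 <= s2 <= 1 -> q <= 3/16 ->
  7/768 <= 3/2*(K p 0 s1 + K q s1 (1/2)) + 1/2*(K q (1/2) s2 + K r s2 1).
Proof.
  intros H1 H2 Hq.
  pose proof (K_W p 0 s1 ltac:(lra)). pose proof (K_W r s2 1 ltac:(lra)).
  pose proof (K_W q s1 (1/2) ltac:(lra)).
  pose proof (K_mono q (3/16) (1/2) s2 ltac:(lra) ltac:(lra)).
  pose proof (cube_split (s1 - 0) (1/2 - s1) ltac:(lra) ltac:(lra)).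
  assert (0 <= (s2 - 1/2) * ((s2-3/16)^2/2 - (1-s2)^2/8)).
  { apply Rmult_le_pos. lra. nra. }
  assert ((1-s2)^3/24 + ((s2-3/16)^3 - (5/16)^3)/6 >= 1/192).
  { assert (0 <= (s2-1/2)^2) by apply pow2_ge_0.
    assert (0 <= (s2-1/2)^3) by (apply pow_le; lra). nra. }
  unfold K in *. lra.
Qed.

Lemma caseb_hi s1 s2 p q r : 0 <= s1 <= 1/2 -> 1/2 <= s2 <= 1 -> 13/16 <= q ->
  1/64 <= 3/2*(K p 0 s1 + K q s1 (1/2)) + 1/2*(K q (1/2) s2 + K r s2 1).
Proof.
  intros H1 H2 Hq.
  pose proof (K_W p 0 s1 ltac:(lra)).
  pose proof (K_nonneg r s2 1 ltac:(lra)). pose proof (K_nonneg q (1/2) s2 ltac:(lra)).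
  pose proof (K_mono q (13/16) s1 (1/2) ltac:(lra) ltac:(lra)).
  assert (0 <= (1/2 - s1) * ((13/16-s1)^2/2 - s1^2/8)).
  { apply Rmult_le_pos. lra. nra. }
  assert (s1^3/8 + ((13/16-s1)^3 - (5/16)^3)/2 >= 1/64).
  { assert (0 <= (s1-1/2)^2) by apply pow2_ge_0.
    assert (0 <= (1/2-s1)^3) by (apply pow_le; lra). nra. }
  unfold K in *. lra.
Qed.

Lemma casea s1 s2 p q r : 0 <= s1 -> s1 <= s2 -> s2 <= 1/2 ->
  79/10000 <= 3/2*(K p 0 s1 + K q s1 s2 + K r s2 (1/2)) + 1/2*(K r (1/2) 1).
Proof.
  intros H1 H2 H3.
  pose proof (K_W p 0 s1 ltac:(lra)). pose proof (K_W q s1 s2 ltac:(lra)).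
  pose proof (cube_split (s1 - 0) (s2 - s1) ltac:(lra) ltac:(lra)).
  assert (3/2*(K p 0 s1 + K q s1 s2) >= s2^3/32) by lra.
  destruct (Rle_dec r (5/16)) as [Hr|Hr].
  { pose proof (K_nonneg r s2 (1/2) ltac:(lra)).
    pose proof (K_mono r (5/16) (1/2) 1 ltac:(lra) ltac:(lra)).
    assert (0 <= s2^3) by (apply pow_le; lra).
    unfold K in *. lra. }
  destruct (Rle_dec r (5/8)) as [Hr2|Hr2].
  { assert (0 <= (s2-4*r/5)^2*(3*r/4-15*s2/32)) by (apply Rmult_le_pos; [apply pow2_ge_0|lra]).
    assert (0 <= r^3) by (apply pow_le; lra).
    pose proof (cube_mono (-1/8) (1/2-r) ltac:(lra)).
    pose proof (cube_mono (3/8) (1-r) ltac:(lra)).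
    unfold K in *. lra. }
  pose proof (K_W r (1/2) 1 ltac:(lra)).
  assert (0 <= (1/2-s2)*((r-s2)^2+(r-s2)*(r-1/2)+(r-1/2)^2 - 3/64)).
  { apply Rmult_le_pos. lra. nra. }
  assert (0 <= (s2-1/2)^2*(s2+1)) by (apply Rmult_le_pos; [apply pow2_ge_0|lra]).
  unfold K in *. lra.
Qed.

Lemma casec s1 s2 p q r : 1/2 <= s1 -> s1 <= s2 -> s2 <= 1 ->
  1/64 <= 3/2*(K p 0 (1/2)) + 1/2*(K p (1/2) s1 + K q s1 s2 + K r s2 1).
Proof.
  intros H1 H2 H3.
  pose proof (K_W p 0 (1/2) ltac:(lra)). pose proof (K_nonneg p (1/2) s1 ltac:(lra)).
  pose proof (K_nonneg q s1 s2 ltac:(lra)). pose proof (K_nonneg r s2 1 ltac:(lra)).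
  replace ((1/2-0)^3/12) with (1/96) in * by field. lra.
Qed.

Lemma lower s1 s2 p q r : 0 <= s1 -> s1 <= s2 -> s2 <= 1 ->
  (4 - sqrt 3)/288 <= Eb s1 s2 p q r.
Proof.
  intros H1 H2 H3.
  pose proof (sqrt_sqrt 3 ltac:(lra)) as Hk. pose proof (sqrt_pos 3) as Hk0.
  set (k := sqrt 3) in *. pose proof (kbounds k Hk Hk0).
  unfold Eb.
  destruct (Rle_dec s2 (1/2)).
  { rewrite (Rmin_left s1), (Rmin_left s2), (Rmax_right s1), (Rmax_right s2) by lra.
    rewrite !K0. pose proof (casea s1 s2 p q r H1 H2 r0). lra. }
  destruct (Rle_dec s1 (1/2)).
  { rewrite (Rmin_left s1), (Rmin_right s2), (Rmax_right s1), (Rmax_left s2) by lra.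
    rewrite !K0.
    destruct (Rle_dec q (3/16)) as [Hq1|Hq1].
    { pose proof (caseb_lo s1 s2 p q r ltac:(lra) ltac:(lra) Hq1). lra. }
    destruct (Rle_dec q (13/16)).
    { pose proof (caseb_win s1 s2 p q r k Hk Hk0 ltac:(lra) ltac:(lra) ltac:(lra)). lra. }
    pose proof (caseb_hi s1 s2 p q r ltac:(lra) ltac:(lra) ltac:(lra)). lra. }
  rewrite (Rmin_right s1), (Rmin_right s2), (Rmax_left s1), (Rmax_left s2) by lra.
  rewrite !K0. pose proof (casec s1 s2 p q r ltac:(lra) H2 H3). lra.
Qed.

Lemma Rmin3_eq A B C x : Rmin ((x-B)^2) (Rmin ((x-C)^2) ((x-A)^2)) = m3 A B C x.
Proof. unfold m3, Rmin. repeat destruct Rle_dec; lra. Qed.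

Lemma sort3 A B C : exists p q r, p <= q <= r /\
  forall x, Rmin ((x-B)^2) (Rmin ((x-C)^2) ((x-A)^2)) = m3 p q r x.
Proof.
  destruct (Rle_dec A B); destruct (Rle_dec B C); destruct (Rle_dec A C).
  all: first
   [ exists A, B, C; split; [lra| intros x; unfold m3, Rmin; repeat destruct Rle_dec; lra]
   | exists A, C, B; split; [lra| intros x; unfold m3, Rmin; repeat destruct Rle_dec; lra]
   | exists B, A, C; split; [lra| intros x; unfold m3, Rmin; repeat destruct Rle_dec; lra]
   | exists B, C, A; split; [lra| intros x; unfold m3, Rmin; repeat destruct Rle_dec; lra]
   | exists C, A, B; split; [lra| intros x; unfold m3, Rmin; repeat destruct Rle_dec; lra]
   | exists C, B, A; split; [lra| intros x; unfold m3, Rmin; repeat destruct Rle_dec; lra] ].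
Qed.

Lemma mindist_sorted beta : admissible 3 beta -> exists p q r, p <= q <= r /\
  forall x, mindist beta x = m3 p q r x.
Proof.
  intros [Hne Hlen].
  destruct beta as [|a [|b [|c [|d t]]]]; simpl in Hlen; try congruence; try lia.
  - destruct (sort3 a a a) as (p & q & r & Hs & Hx). exists p, q, r. split; [exact Hs|].
    intros x. rewrite <- Hx. simpl. unfold Rmin. repeat destruct Rle_dec; lra.
  - destruct (sort3 a b b) as (p & q & r & Hs & Hx). exists p, q, r. split; [exact Hs|].
    intros x. rewrite <- Hx. simpl. unfold Rmin. repeat destruct Rle_dec; lra.
  - destruct (sort3 a b c) as (p & q & r & Hs & Hx). exists p, q, r. split; [exact Hs|].
    intros x. rewrite <- Hx. simpl. reflexivity.
Qed.

Lemma Verr_lower beta : admissible 3 beta -> (4 - sqrt 3)/288 <= Verr beta.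
Proof.
  intros H. destruct (mindist_sorted beta H) as (p & q & r & Hs & Hx).
  unfold Verr. rewrite (EP_m3 (mindist beta) p q r Hs Hx).
  apply lower; unfold clamp, Rmax, Rmin; repeat destruct Rle_dec; lra.
Qed.

Theorem lemma4p5 :
  let b := (21 - sqrt 3) / 8 - 2 in
  let alpha := (b / 3 :: b :: (21 - sqrt 3) / 24 :: nil) in
  optimal_set 3 alpha /\ Rabs (Verr alpha - 787482 / 10 ^ 8) <= 5 / 10 ^ 9.
Proof.
  intros b alpha.
  pose proof (sqrt_sqrt 3 ltac:(lra)) as Hk. pose proof (sqrt_pos 3) as Hk0.
  assert (Hadm : admissible 3 alpha).
  { split. unfold alpha; congruence. simpl; lia. }
  assert (HV : Verr alpha = (4 - sqrt 3)/288).
  { unfold b in alpha. set (k := sqrt 3) in *. pose proof (kbounds k Hk Hk0).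
    unfold Verr.
    rewrite (EP_m3 (mindist alpha) (((21 - k) / 8 - 2)/3) ((21 - k) / 8 - 2) ((21 - k) / 24)).
    2: lra.
    2:{ intros x. unfold alpha. simpl. apply Rmin3_eq. }
    unfold clamp, Eb.
    rewrite (Rmin_left _ 1) by lra. rewrite (Rmax_right 0) by lra.
    rewrite (Rmin_left _ 1) by lra. rewrite (Rmax_right 0) by lra.
    rewrite (Rmin_left _ (1/2)) by lra. rewrite (Rmax_right _ (1/2)) by lra.
    rewrite (Rmin_right _ (1/2)) by lra. rewrite (Rmax_left _ (1/2)) by lra.
    rewrite !K0.
    assert (E : 3 / 2 * (K (((21 - k) / 8 - 2) / 3) 0 ((((21 - k) / 8 - 2) / 3 + ((21 - k) / 8 - 2)) / 2) +
      K ((21 - k) / 8 - 2) ((((21 - k) / 8 - 2) / 3 + ((21 - k) / 8 - 2)) / 2) (1 / 2) + 0) +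
      1 / 2 * (0 + K ((21 - k) / 8 - 2) (1 / 2) (((21 - k) / 8 - 2 + (21 - k) / 24) / 2) +
      K ((21 - k) / 24) (((21 - k) / 8 - 2 + (21 - k) / 24) / 2) 1) - (4 - k)/288 = (k*k - 3) * (k/1728)).
    { unfold K. field. }
    rewrite Hk in E. lra. }
  split.
  - split; auto. intros beta Hb. rewrite HV. apply Verr_lower; auto.
  - rewrite HV. assert (17320508/10000000 <= sqrt 3 <= 17320509/10000000) by (split; nra).
    unfold Rabs. destruct Rcase_abs; lra.
Qed.
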